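(* Let $G$ be a graph, $\boldsymbol{\gamma}\in\mathbb{N}_{\ge0}^{V(G)}$ any vector, $R\in\mathbb{N}_{\ge0}$ and $\phi,\psi\in(0,1)$. If there exists a graph $W$ with embedding $\Pi_{W\mapsto G}$ that is an $(R,\phi,\psi)$-witness of $(G,\boldsymbol{0})$ with respect to $\boldsymbol{\gamma}$, then $G$ is a $\psi^2\phi$-expander.
   Context: Graphs are directed unweighted multigraphs (self-loops allowed); $\deg_G(v)$ counts incident edges with a self-loop counting $2$; $\mathrm{vol}_G(S)=\sum_{v\in S}\deg_G(v)$; for $S\subseteq V$, $\overline{S}=V\setminus S$, $E_G(S,\overline{S})$ is the set of edges with tail in $S$ and head in $\overline{S}$; $\overleftarrow{G}$ is $G$ with edges reversed; for a vector $\boldsymbol{r}$, $\boldsymbol{r}(S)=\sum_{s\in S}\boldsymbol{r}(s)$. A cut $(S,\overline{S})$ is $\phi$-out-sparse if $\mathrm{vol}_G(S)\le\mathrm{vol}_G(\overline{S})$ and $|E_G(S,\overline{S})|<\phi\,\mathrm{vol}_G(S)$; $G$ is a $\phi$-expander if neither $G$ nor $\overleftarrow{G}$ has a $\phi$-out-sparse cut. An embedding $\Pi_{W\mapsto G}$ of a graph $W$ on the same vertex set as $G$ maps each edge $(u,v)$ of $W$ to a $u$-to-$v$ path in $G$; its congestion is the maximum over $e\in E(G)$ of the number of edges of $W$ whose path contains $e$. Given $\boldsymbol{r},\boldsymbol{\gamma}\in\mathbb{N}_{\ge0}^{V(G)}$, $\phi,\psi\in(0,1)$, $R\in\mathbb{N}_{\ge0}$,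 $(W,\Pi_{W\mapsto G})$ is an $(R,\phi,\psi)$-out-witness of $(G,\boldsymbol{r})$ w.r.t. $\boldsymbol{\gamma}$ if (1) $\|\boldsymbol{r}\|_1\le R$; (2) for every $v$, $\deg_W(v)+\boldsymbol{r}(v)\in[\deg_G(v),\frac{1}{\psi}\deg_G(v)]$; (3) for every $S\subseteq V$ with $\boldsymbol{\gamma}(S)\le\boldsymbol{\gamma}(\overline{S})$, $|E_W(S,\overline{S})|+\boldsymbol{r}(S)\ge\psi(\mathrm{vol}_W(S)+\boldsymbol{r}(S))$; (4) $\Pi_{W\mapsto G}$ has congestion at most $\frac{1}{\psi\phi}$. It is an $(R,\phi,\psi)$-witness if moreover $\overleftarrow{W}$ (with the reversed paths) is an $(R,\phi,\psi)$-out-witness of $(\overleftarrow{G},\boldsymbol{r})$ w.r.t. $\boldsymbol{\gamma}$. *)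

(* Defs.v *)
From HB Require Import structures.
From mathcomp Require Import all_boot all_order all_algebra.
Set Implicit Arguments. Unset Strict Implicit. Unset Printing Implicit Defensive.
Import Order.TTheory GRing.Theory Num.Theory.

(* A directed multigraph (self-loops allowed) on the finite vertex set V:
   a finite type of edges, each with a tail and a head. *)
Record digraph (V : finType) := Digraph {
  edge : finType;
  tail : edge -> V;
  head : edge -> V }.

Arguments Digraph {V}.

Section Graphs.
Variable V : finType.

Definition rev_graph (G : digraph V) : digraph V :=
  Digraph (edge G) (@head V G) (@tail V G).

(* degree: number of incident edges, a self-loop counting 2 *)
Definition deg (G : digraph V) (v : V) : nat :=
  #|[set e : edge G | tail e == v]| + #|[set e : edge G | head e == v]|.

Definition vol (G : digraph V) (S : {set V}) : nat := \sum_(v in S) deg G v.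

Definition cut_out (G : digraph V) (S : {set V}) : nat :=
  #|[set e : edge G | (tail e \in S) && (head e \notin S)]|.

Definition vsum (r : V -> nat) (S : {set V}) : nat := \sum_(v in S) r v.

Fixpoint is_walk (G : digraph V) (u : V) (p : seq (edge G)) (v : V) : bool :=
  match p with
  | [::] => u == v
  | e :: p' => (tail e == u) && is_walk (head e) p' v
  end.

Definition embedding (W G : digraph V) := forall f : edge W, seq (edge G).

Definition is_embedding (W G : digraph V) (Pi : embedding W G) : Prop :=
  forall f : edge W, is_walk (tail f) (Pi f) (head f).

Definition congestion (W G : digraph V) (Pi : embedding W G) : nat :=
  \max_(e : edge G) #|[set f : edge W | e \in Pi f]|.

Definition rev_embedding (W G : digraph V) (Pi : embedding W G)
  : embedding (rev_graph W) (rev_graph G) :=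
  fun f => rev (Pi f).

Section Witness.
Variable F : realFieldType.
Local Open Scope ring_scope.

Definition out_witness (G : digraph V) (r gamma : V -> nat) (R : nat)
  (phi psi : F) (W : digraph V) (Pi : embedding W G) : Prop :=
  [/\ is_embedding Pi,
      (\sum_(v : V) r v <= R)%N,
      (forall v : V, (deg G v)%:R <= ((deg W v + r v)%N)%:R :> F /\
                     ((deg W v + r v)%N)%:R <= psi^-1 * (deg G v)%:R),
      (forall S : {set V}, (vsum gamma S <= vsum gamma (~: S))%N ->
          psi * ((vol W S + vsum r S)%N)%:R <= ((cut_out W S + vsum r S)%N)%:R)
    & (congestion Pi)%:R <= (psi * phi)^-1].

Definition witness (G : digraph V) (r gamma : V -> nat) (R : nat)
  (phi psi : F) (W : digraph V) (Pi : embedding W G) : Prop :=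
  @out_witness G r gamma R phi psi W Pi /\
  @out_witness (rev_graph G) r gamma R phi psi (rev_graph W) (rev_embedding Pi).

Definition out_sparse (G : digraph V) (phi : F) (S : {set V}) : Prop :=
  (vol G S <= vol G (~: S))%N /\ (cut_out G S)%:R < phi * (vol G S)%:R.

Definition expander (G : digraph V) (phi : F) : Prop :=
  (forall S : {set V}, ~ out_sparse G phi S) /\
  (forall S : {set V}, ~ out_sparse (rev_graph G) phi S).

End Witness.
End Graphs.

(* Main.v *)
Require Import Defs.
From HB Require Import structures.
From mathcomp Require Import all_boot all_order all_algebra.
Import Order.TTheory GRing.Theory Num.Theory.
Local Open Scope ring_scope.
Lemma walk_cross (V : finType) (G : digraph V) (S : {set V}) p u v :
  @is_walk V G u p v -> u \in S -> v \notin S ->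
  exists2 e : edge G, e \in p & (tail e \in S) && (Defs.head e \notin S).
Proof.
elim: p u => [|e p IH] u /=; first by move/eqP=> -> ->.
case/andP=> /eqP te hw uS vS.
case hS: (Defs.head e \in S).
  have [e' e'p H] := IH _ hw hS vS; exists e' => //; by rewrite inE e'p orbT.
by exists e; rewrite ?inE ?eqxx // te uS hS.
Qed.

Lemma cut_cong (V : finType) (W G : digraph V) (Pi : embedding W G) (S : {set V}) :
  is_embedding Pi -> (cut_out W S <= congestion Pi * cut_out G S)%N.
Proof.
move=> hP; rewrite /cut_out.
set A := [set f : edge W | _]; set C := [set e : edge G | _].
rewrite -sum1_card.
apply: (@leq_trans (\sum_(f in A) \sum_(e in C) (e \in Pi f : nat))).
  apply: leq_sum => f; rewrite inE => /andP [fS fN].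
  have [e ep eC] := @walk_cross _ _ _ _ _ _ (hP f) fS fN.
  by rewrite (bigD1 e) ?inE //= ep leq_addr.
rewrite exchange_big /= mulnC -sum1_card big_distrl /=.
apply: leq_sum => e _; rewrite mul1n.
apply: (@leq_trans (\sum_(f : edge W) (e \in Pi f : nat))).
  rewrite [X in (_ <= X)%N](bigID (mem A)) /=. exact: leq_addr.
rewrite -big_mkcondr /= sum1_card.
apply: leq_trans (leq_bigmax e). 
by rewrite -[X in (X <= _)%N]/(#|[pred f | e \in Pi f]|); apply: subset_leq_card; apply/subsetP => f; rewrite !inE.
Qed.
Lemma core (F : realFieldType) (V : finType) (dG dW cG cW g : {set V} -> nat) (c : nat) (phi psi : F) :
  0 < phi -> 0 < psi ->
  (forall S, (dG S <= dW S)%N) ->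
  (forall S, (g S <= g (~: S))%N -> psi * (dW S)%:R <= (cW S)%:R) ->
  (forall S, (g S <= g (~: S))%N -> psi * (dW S)%:R <= (cW (~: S))%:R) ->
  (forall S, (cW S <= c * cG S)%N) ->
  c%:R <= (psi * phi)^-1 ->
  forall S, (dG S <= dG (~: S))%N -> psi ^+ 2 * phi * (dG S)%:R <= (cG S)%:R.
Proof.
move=> ph ps hv h1 h2 hc hcong S hS.
have [X [hX1 hX2]] : exists X, (dG S <= dW X)%N /\ psi * (dW X)%:R <= (cW S)%:R.
  case: (leqP (g S) (g (~: S))) => hg.
    by exists S; split; [apply: hv | apply: h1].
  exists (~: S); split; first exact: leq_trans hS (hv _).
  by rewrite -{2}(setCK S); apply: h2; rewrite setCK ltnW.
have pp : 0 < psi * phi by rewrite mulr_gt0.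
have h3 : psi * phi * (cW S)%:R <= (cG S)%:R.
  apply: (le_trans (y := psi * phi * (c * cG S)%:R)).
    apply: ler_wpM2l; [exact: ltW| rewrite ler_nat; exact: hc].
  rewrite natrM mulrA -[X in _ <= X]mul1r; apply: ler_wpM2r => //.
  by rewrite -[X in _ <= X](mulfV (lt0r_neq0 pp)) ler_pM2l.
apply: le_trans h3.
rewrite expr2 -!mulrA ler_pM2l // mulrA (mulrC psi) -mulrA ler_pM2l //.
apply: le_trans hX2; by rewrite ler_pM2l // ler_nat.
Qed.

Lemma deg_rev (V : finType) (G : digraph V) v : deg (rev_graph G) v = deg G v.
Proof. by rewrite /deg addnC. Qed.

Lemma vol_rev (V : finType) (G : digraph V) S : vol (rev_graph G) S = vol G S.
Proof. by apply: eq_bigr => v _; rewrite deg_rev. Qed.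

Lemma cut_rev (V : finType) (G : digraph V) S : cut_out (rev_graph G) S = cut_out G (~: S).
Proof. by rewrite /cut_out; apply: eq_card => e; rewrite !inE negbK andbC. Qed.

Lemma vsum0 (V : finType) (S : {set V}) : vsum (fun _ => 0%N) S = 0%N.
Proof. by rewrite /vsum big1. Qed.

Lemma ow_facts (F : realFieldType) (V : finType) (G : digraph V) gamma R (phi psi : F) W Pi :
  @out_witness V F G (fun _ => 0%N) gamma R phi psi W Pi ->
  [/\ forall S, (vol G S <= vol W S)%N,
      forall S, (vsum gamma S <= vsum gamma (~: S))%N -> psi * (vol W S)%:R <= (cut_out W S)%:R,
      forall S, (cut_out W S <= congestion Pi * cut_out G S)%N
    & (congestion Pi)%:R <= (psi * phi)^-1].
Proof.
case=> hE _ hd hS hc; split => //.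
- move=> S; apply: leq_sum => v _; have [h _] := hd v.
  by move: h; rewrite addn0 ler_nat.
- by move=> S /hS; rewrite !vsum0 !addn0.
- by move=> S; apply: cut_cong.
Qed.

Theorem mainTheorem2 (F : realFieldType) (V : finType) (G : digraph V)
  (gamma : V -> nat) (R : nat) (phi psi : F) :
  0 < phi < 1 -> 0 < psi < 1 ->
  (exists (W : digraph V) (Pi : embedding W G),
      @witness V F G (fun _ => 0%N) gamma R phi psi W Pi) ->
  @expander V F G (psi ^+ 2 * phi).
Proof.
case/andP=> ph _; case/andP=> ps _ [W [Pi [w1 w2]]].
have [a1 b1 c1 d1] := @ow_facts _ _ _ _ _ _ _ _ _ w1.
have [a2 b2 c2 d2] := @ow_facts _ _ _ _ _ _ _ _ _ w2.
split=> S [hS hlt]; move: hlt; apply/negP; rewrite -leNgt.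
- apply: (@core _ _ (vol G) (vol W) (cut_out G) (cut_out W) (vsum gamma) _ _ _ ph ps a1 b1 _ c1 d1 _ hS).
  by move=> X /b2; rewrite vol_rev cut_rev.
- apply: (@core _ _ (vol (rev_graph G)) (vol (rev_graph W)) (cut_out (rev_graph G)) (cut_out (rev_graph W)) (vsum gamma) _ _ _ ph ps a2 b2 _ c2 d2 _ hS).
  by move=> X /b1; rewrite -vol_rev -(setCK X) -cut_rev setCK.
Qed.
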